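(* Let $K\ge1$, $T\ge1$, let $\ell_1,\dots,\ell_T\in[0,1]^K$ be arbitrary loss vectors. The regret of FlipFlop with parameters $\phi=2.37$ and $\alpha=1.243$ is simultaneously bounded by \[ \mathcal{R}^{\mathrm{ff}}_T\le 5.64\,\mathcal{R}^{\mathrm{ftl}}_T+4.64, \qquad \mathcal{R}^{\mathrm{ff}}_T\le 5.64\sqrt{\frac{L_T^*(T-L_T^* )}{T}\ln K}+35.53\ln K+7.78\sqrt{\ln K}+7.54. \]
   Context: Hedge setting: $K$ experts; in round $t$ the learner chooses a probability vector $w_t$, then $\ell_t$ is revealed and the learner suffers $h_t=\sum_kw_{t,k}\ell_{t,k}$. Write $L_{t,k}=\sum_{s=1}^t\ell_{s,k}$ ($L_{0,k}=0$), $L^*_t=\min_kL_{t,k}$, $H_T=\sum_{t\le T}h_t$, regret $\mathcal{R}_T=H_T-L^*_T$. Exponential weights with learning rate $\eta\in(0,\infty]$ at time $t$: $w_{t,k}=e^{-\eta L_{t-1,k}}/\sum_je^{-\eta L_{t-1,j}}$ if $\eta<\infty$; for $\eta=\infty$, $w_t$ is uniform on $\{k:L_{t-1,k}=L^*_{t-1}\}$. With learning rate $\eta_t$ in round $t$: mix loss $m_t=-\frac1{\eta_t}\ln\sum_kw_{t,k}e^{-\eta_t\ell_{t,k}}$ if $\eta_t<\infty$, $m_t=L^*_t-L^*_{t-1}$ if $\eta_t=\infty$; mixability gap $\delta_t=h_t-m_t$. Follow-the-Leader (FTL) uses $\eta_t=\infty$ in every round; $\mathcal{R}^{\mathrm{ftl}}_T$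 is its regret. FlipFlop with parameters $\phi>1,\alpha>0$: keeps accumulators $\overline{\Delta}$ (flip) and $\underline{\Delta}$ (flop), both initially $0$, starting in the flip regime. In round $t$: flip regime uses $\eta_t=\infty$; flop regime uses $\eta_t=\ln K/\underline{\Delta}_{t-1}$ ($=\infty$ if $\underline{\Delta}_{t-1}=0$); weights are exponential weights with learning rate $\eta_t$ from the cumulative losses $L_{t-1}$ over all rounds. After round $t$, $\delta_t$ is added to the current regime's accumulator. If in flip and $\overline{\Delta}_t>(\phi/\alpha)\underline{\Delta}_t$, switch to flop for round $t+1$; if in flop and $\underline{\Delta}_t>\alpha\overline{\Delta}_t$, switch to flip for round $t+1$. $\mathcal{R}^{\mathrm{ff}}_T$ is the regret of FlipFlop. *)

(* Defs.v *)
From Stdlib Require Import Reals Lra Lia List.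
Import ListNotations.
Open Scope R_scope.

(* Experts are indexed 0..K-1; rounds are indexed 1..T.
   [loss t k] is the loss ell_{t,k} of expert k in round t. *)

Definition sumK (K : nat) (f : nat -> R) : R :=
  fold_right Rplus 0 (map f (seq 0 K)).

(* minimum over experts k < K (K >= 1 assumed where used) *)
Definition minK (K : nat) (f : nat -> R) : R :=
  fold_right Rmin (f 0%nat) (map f (seq 0 K)).

Fixpoint cumL (loss : nat -> nat -> R) (t : nat) (k : nat) : R :=
  match t with
  | O => 0
  | S t' => cumL loss t' k + loss t k
  end.

Definition Lstar (K : nat) (loss : nat -> nat -> R) (t : nat) : R :=
  minK K (cumL loss t).

(* Learning rates: [None] encodes eta = +infinity, [Some e] a finite eta. *)
Definition lrate := option R.

Definition ew_weight (K : nat) (eta : lrate) (Lprev : nat -> R) (k : nat) : R :=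
  match eta with
  | None =>
      let isLeader := fun j => if Req_EM_T (Lprev j) (minK K Lprev) then 1 else 0 in
      isLeader k / sumK K isLeader
  | Some e =>
      exp (- e * Lprev k) / sumK K (fun j => exp (- e * Lprev j))
  end.

Definition hloss (K : nat) (loss : nat -> nat -> R) (eta : lrate) (t : nat) : R :=
  sumK K (fun k => ew_weight K eta (cumL loss (t - 1)) k * loss t k).

(* mix loss m_t.  For eta = 0 (only possible when ln K = 0) we use the
   limiting value m_t = h_t. *)
Definition mixloss (K : nat) (loss : nat -> nat -> R) (eta : lrate) (t : nat) : R :=
  match eta with
  | None => Lstar K loss t - Lstar K loss (t - 1)
  | Some e =>
      if Req_EM_T e 0 then hloss K loss eta t
      else - (1 / e) * ln (sumK K (fun k =>
               ew_weight K eta (cumL loss (t - 1)) k * exp (- e * loss t k)))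
  end.

Definition mixgap (K : nat) (loss : nat -> nat -> R) (eta : lrate) (t : nat) : R :=
  hloss K loss eta t - mixloss K loss eta t.

(* FlipFlop state after n rounds: (in_flip_regime, flip accumulator,
   flop accumulator); the regime component is the regime for round n+1. *)
Record ffstate := FFState { ff_flip : bool; ff_dflip : R; ff_dflop : R }.

Definition ff_eta (K : nat) (s : ffstate) : lrate :=
  if ff_flip s then None
  else if Req_EM_T (ff_dflop s) 0 then None
  else Some (ln (INR K) / ff_dflop s).

Fixpoint ff_state (K : nat) (phi alpha : R) (loss : nat -> nat -> R) (n : nat)
  : ffstate :=
  match n with
  | O => FFState true 0 0
  | S n' =>
      let s := ff_state K phi alpha loss n' in
      let d := mixgap K loss (ff_eta K s) n in
      if ff_flip s then
        let df := ff_dflip s + d in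
        if Rlt_dec ((phi / alpha) * ff_dflop s) df
        then FFState false df (ff_dflop s)
        else FFState true df (ff_dflop s)
      else
        let dl := ff_dflop s + d in
        if Rlt_dec (alpha * ff_dflip s) dl
        then FFState true (ff_dflip s) dl
        else FFState false (ff_dflip s) dl
  end.

Definition ff_rate (K : nat) (phi alpha : R) (loss : nat -> nat -> R) (t : nat)
  : lrate := ff_eta K (ff_state K phi alpha loss (t - 1)).

Definition sumT (T : nat) (f : nat -> R) : R :=
  fold_right Rplus 0 (map f (seq 1 T)).

Definition regret_ff (K : nat) (phi alpha : R) (loss : nat -> nat -> R) (T : nat) : R :=
  sumT T (fun t => hloss K loss (ff_rate K phi alpha loss t) t) - Lstar K loss T.

Definition regret_ftl (K : nat) (loss : nat -> nat -> R) (T : nat) : R :=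
  sumT T (fun t => hloss K loss None t) - Lstar K loss T.

(* Main.v *)
Require Import Defs.
From Stdlib Require Import Reals Lra Lia List Factorial.
Import ListNotations.
Open Scope R_scope.

Lemma cv_const (c : R) : Un_cv (fun _ => c) c.
Proof. intros e He; exists 0%nat; intros; rewrite R_dist_eq; lra. Qed.

Lemma E1_S x n : E1 x (S n) = E1 x n + / INR (fact (S n)) * x ^ (S n).
Proof. reflexivity. Qed.

Lemma exp_upper x : 0 <= x < 3 ->
  exp x <= 1 + x + x^2 / (2 * (1 - x/3)).
Proof.
  intros [H0 H3].
  set (q := 1 - x/3). assert (Hq : 0 < q) by (unfold q; lra).
  set (U := 1 + x + x^2 / (2 * q)).
  set (r := x / (3 * q)).
  assert (Hr : 0 <= r) by (unfold r; apply Rmult_le_pos; [lra| left; apply Rinv_0_lt_compat; lra]).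
  assert (Hinv : forall n, (2 <= n)%nat -> E1 x n + / INR (fact n) * x ^ n * r <= U).
  { intros n Hn. induction Hn.
    - unfold E1, U, r; simpl. apply Req_le. unfold q. field. lra.
    - rewrite E1_S.
      assert (Hf : INR (fact (S m)) = INR (S m) * INR (fact m)) by (rewrite <- mult_INR; reflexivity).
      rewrite Hf.
      assert (Hfm : 0 < INR (fact m)) by (apply lt_0_INR; apply lt_O_fact).
      assert (Hm : 3 <= INR (S m)) by (replace 3 with (INR 3) by (simpl; lra); apply le_INR; lia).
      assert (Hxn : 0 <= x ^ m) by (apply pow_le; lra).
      set (t := / INR (fact m) * x ^ m) in *.
      assert (Ht : 0 <= t) by (unfold t; apply Rmult_le_pos; [left; apply Rinv_0_lt_compat; lra|lra]).
      assert (E : / (INR (S m) * INR (fact m)) * x ^ S m = t * (x / INR (S m))).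
      { unfold t. rewrite <- tech_pow_Rmult. field; lra. }
      rewrite E.
      assert (K1 : t * (x / INR (S m)) + t * (x / INR (S m)) * r <= t * r).
      { assert (x / INR (S m) * (1 + r) <= r).
        { unfold r. replace (1 + x / (3*q)) with ((3*q + x) / (3*q)) by (field; lra).
          unfold q. apply Rmult_le_reg_r with (3 * (1 - x/3) * INR (S m)); [nra|].
          field_simplify; try lra. nra. }
        nra. }
      lra. }
  assert (Hle : forall n, E1 x n <= U).
  { intro n. destruct (Compare_dec.le_lt_dec 2 n) as [h|h].
    - specialize (Hinv n h).
      assert (0 <= / INR (fact n) * x ^ n * r).
      { apply Rmult_le_pos; auto. apply Rmult_le_pos; [left; apply Rinv_0_lt_compat, lt_0_INR, lt_O_fact| apply pow_le; lra]. }
      lra.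
    - assert (n = 0 \/ n = 1)%nat as [->| ->] by lia; unfold E1, U; simpl;
      assert (0 <= x^2/(2*q)) by (apply Rmult_le_pos; [nra| left; apply Rinv_0_lt_compat; lra]); lra. }
  exact (Rle_cv_lim Hle (E1_cvg x) (cv_const U)).
Qed.

Lemma exp_lower3 y : 0 <= y -> 1 + y + y^2/2 + y^3/6 <= exp y.
Proof.
  intros Hy.
  assert (H := sum_incr (fun k => / INR (fact k) * y ^ k) 3 (exp y) (E1_cvg y)).
  assert (Hn : forall n, 0 <= / INR (fact n) * y ^ n).
  { intro n; apply Rmult_le_pos; [left; apply Rinv_0_lt_compat, lt_0_INR, lt_O_fact| apply pow_le; lra]. }
  specialize (H Hn). simpl in H. lra.
Qed.

Lemma exp_neg_upper' y : 0 <= y -> exp (- y) <= 1 - y + y^2/2.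
Proof.
  intros Hy.
  assert (H := exp_lower3 y Hy).
  assert (Hp : 0 < 1 + y + y^2/2 + y^3/6) by nra.
  rewrite exp_Ropp.
  assert (Hq : 0 < 1 - y + y^2/2) by nra.
  apply Rmult_le_reg_r with (exp y); [apply exp_pos|].
  rewrite Rinv_l by (apply Rgt_not_eq, exp_pos).
  apply Rle_trans with ((1 - y + y^2/2) * (1 + y + y^2/2 + y^3/6)).
  - nra.
  - apply Rmult_le_compat_l; lra.
Qed.

Lemma exp_neg_upper x : x <= 0 -> exp x <= 1 + x + x^2/2.
Proof.
  intros Hx. replace x with (- (- x)) by ring.
  eapply Rle_trans; [apply exp_neg_upper'; lra|]. rewrite Ropp_involutive. replace ((-x)^2) with (x^2) by (simpl; ring). lra.
Qed.

Lemma exp_convex p z : 0 <= p <= 1 -> exp (p * z) <= 1 + p * (exp z - 1).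
Proof.
  intros Hp. set (m := p * z).
  assert (H1 : exp m * (1 + (z - m)) <= exp z).
  { assert (E : exp z = exp m * exp (z - m)) by (rewrite <- exp_plus; f_equal; ring).
    rewrite E; apply Rmult_le_compat_l; [left; apply exp_pos| apply exp_ineq1_le]. }
  assert (H2 : exp m * (1 + (0 - m)) <= 1).
  { assert (E : 1 = exp m * exp (0 - m)) by (rewrite <- exp_plus, <- exp_0; f_equal; ring).
    rewrite E at 2; apply Rmult_le_compat_l; [left; apply exp_pos| apply exp_ineq1_le]. }
  assert (exp m = exp m * (p * (1 + (z - m)) + (1 - p) * (1 + (0 - m)))) by (unfold m; ring).
  nra.
Qed.

Lemma ln_le x y : 0 < x -> x <= y -> ln x <= ln y.
Proof. intros Hx Hxy. destruct (Rle_lt_or_eq_dec _ _ Hxy) as [H|H].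
  - left; apply ln_increasing; auto.
  - rewrite H; lra. Qed.

Lemma exp_le x y : x <= y -> exp x <= exp y.
Proof. intros H. destruct (Rle_lt_or_eq_dec _ _ H) as [H'|H'].
  - left; apply exp_increasing; auto.
  - rewrite H'; lra. Qed.

Definition lsum {A} (l : list A) (f : A -> R) : R := fold_right Rplus 0 (map f l).

Lemma lsum_ext {A} (l : list A) f g : (forall x, In x l -> f x = g x) -> lsum l f = lsum l g.
Proof. induction l as [|a l IH]; intros H; simpl; [reflexivity|]. unfold lsum in *; simpl.
  rewrite H by (left; auto). rewrite IH; auto. intros; apply H; right; auto. Qed.

Lemma lsum_le {A} (l : list A) f g : (forall x, In x l -> f x <= g x) -> lsum l f <= lsum l g.
Proof. induction l as [|a l IH]; intros H; unfold lsum in *; simpl; [lra|].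
  assert (f a <= g a) by (apply H; left; auto).
  assert (fold_right Rplus 0 (map f l) <= fold_right Rplus 0 (map g l)) by (apply IH; intros; apply H; right; auto).
  lra. Qed.

Lemma lsum_plus {A} (l : list A) f g : lsum l (fun x => f x + g x) = lsum l f + lsum l g.
Proof. induction l as [|a l IH]; unfold lsum in *; simpl; [lra|]. rewrite IH; ring. Qed.

Lemma lsum_scal {A} (l : list A) c f : lsum l (fun x => c * f x) = c * lsum l f.
Proof. induction l as [|a l IH]; unfold lsum in *; simpl; [lra|]. rewrite IH; ring. Qed.

Lemma lsum_const {A} (l : list A) c : lsum l (fun _ => c) = INR (length l) * c.
Proof. induction l as [|a l IH]; unfold lsum in *; simpl length; [simpl; lra|].
  simpl fold_right. rewrite IH. rewrite S_INR. ring. Qed.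

Lemma lsum_nonneg {A} (l : list A) f : (forall x, In x l -> 0 <= f x) -> 0 <= lsum l f.
Proof. intros H. replace 0 with (lsum l (fun _ => 0)).
  apply lsum_le; auto. rewrite lsum_const; ring. Qed.

Lemma lsum_ge_term {A} (l : list A) f y : (forall x, In x l -> 0 <= f x) -> In y l -> f y <= lsum l f.
Proof. induction l as [|a l IH]; intros H Hy; [destruct Hy|]. unfold lsum in *; simpl.
  destruct Hy as [<-|Hy].
  - assert (0 <= fold_right Rplus 0 (map f l)) by (apply (lsum_nonneg l f); intros; apply H; right; auto). lra.
  - assert (0 <= f a) by (apply H; left; auto).
    assert (f y <= fold_right Rplus 0 (map f l)) by (apply IH; auto; intros; apply H; right; auto). lra.
Qed.

Lemma lsum_app {A} (l1 l2 : list A) f : lsum (l1 ++ l2) f = lsum l1 f + lsum l2 f.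
Proof. unfold lsum. rewrite map_app, fold_right_app.
  assert (G : forall (l : list R) a, fold_right Rplus a l = fold_right Rplus 0 l + a).
  { induction l as [|b l IH]; intros a; simpl; [ring|]. rewrite IH; ring. }
  rewrite G. ring. Qed.

Lemma sumK_lsum K f : sumK K f = lsum (seq 0 K) f.
Proof. reflexivity. Qed.

Lemma sumK_ext K f g : (forall k, (k < K)%nat -> f k = g k) -> sumK K f = sumK K g.
Proof. intros H. rewrite !sumK_lsum. apply lsum_ext. intros x Hx. apply in_seq in Hx. apply H; lia. Qed.

Lemma sumK_le K f g : (forall k, (k < K)%nat -> f k <= g k) -> sumK K f <= sumK K g.
Proof. intros H. rewrite !sumK_lsum. apply lsum_le. intros x Hx. apply in_seq in Hx. apply H; lia. Qed.

Lemma sumK_nonneg K f : (forall k, (k < K)%nat -> 0 <= f k) -> 0 <= sumK K f.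
Proof. intros H. rewrite !sumK_lsum. apply lsum_nonneg. intros x Hx. apply in_seq in Hx. apply H; lia. Qed.

Lemma sumK_ge_term K f j : (forall k, (k < K)%nat -> 0 <= f k) -> (j < K)%nat -> f j <= sumK K f.
Proof. intros H Hj. rewrite !sumK_lsum. apply lsum_ge_term. intros x Hx. apply in_seq in Hx. apply H; lia.
  apply in_seq; lia. Qed.

Lemma sumK_plus K f g : sumK K (fun x => f x + g x) = sumK K f + sumK K g.
Proof. apply lsum_plus. Qed.

Lemma sumK_scal K c f : sumK K (fun x => c * f x) = c * sumK K f.
Proof. apply lsum_scal. Qed.

Lemma sumK_const K c : sumK K (fun _ => c) = INR K * c.
Proof. rewrite sumK_lsum, lsum_const, length_seq. reflexivity. Qed.

Lemma sumK_lin K w l c0 c1 :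
  sumK K (fun k => w k * (c0 + c1 * l k)) = c0 * sumK K w + c1 * sumK K (fun k => w k * l k).
Proof. rewrite <- !sumK_scal, <- sumK_plus. apply sumK_ext. intros; ring. Qed.

Lemma sumT_S T f : sumT (S T) f = sumT T f + f (S T).
Proof. unfold sumT. rewrite seq_S. change (fold_right Rplus 0 (map f (seq 1 T ++ [(1 + T)%nat])) = lsum (seq 1 T) f + f (S T)).
  fold (lsum (seq 1 T ++ [(1+T)%nat]) f). rewrite lsum_app. unfold lsum at 2. simpl. ring. Qed.

Lemma sumT_0 f : sumT 0 f = 0.
Proof. reflexivity. Qed.

Lemma sumT_ext T f g : (forall t, (1 <= t <= T)%nat -> f t = g t) -> sumT T f = sumT T g.
Proof. intros H. unfold sumT. fold (lsum (seq 1 T) f). fold (lsum (seq 1 T) g). apply lsum_ext.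
  intros x Hx. apply in_seq in Hx. apply H; lia. Qed.

Lemma sumT_plus T f g : sumT T (fun x => f x + g x) = sumT T f + sumT T g.
Proof. apply lsum_plus. Qed.

Lemma sumT_scal T c f : sumT T (fun x => c * f x) = c * sumT T f.
Proof. apply lsum_scal. Qed.

Lemma sumT_const T c : sumT T (fun _ => c) = INR T * c.
Proof. unfold sumT. fold (lsum (seq 1 T) (fun _ => c)). rewrite lsum_const, length_seq. reflexivity. Qed.

Lemma sumT_nonneg T f : (forall t, (1 <= t <= T)%nat -> 0 <= f t) -> 0 <= sumT T f.
Proof. intros H. unfold sumT. fold (lsum (seq 1 T) f). apply lsum_nonneg.
  intros x Hx. apply in_seq in Hx. apply H; lia. Qed.

Lemma fr_min_le (a : R) l : fold_right Rmin a l <= a /\ forall x, In x l -> fold_right Rmin a l <= x.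
Proof. induction l as [|b l [IH1 IH2]]; simpl; split.
  - lra.
  - intros _ [].
  - apply Rle_trans with (fold_right Rmin a l); [apply Rmin_r|auto].
  - intros x [<-|Hx]; [apply Rmin_l|]. apply Rle_trans with (fold_right Rmin a l); [apply Rmin_r|auto].
Qed.

Lemma fr_min_att (a : R) l : fold_right Rmin a l = a \/ In (fold_right Rmin a l) l.
Proof. induction l as [|b l IH]; simpl; [auto|].
  destruct (Rle_dec b (fold_right Rmin a l)).
  - rewrite Rmin_left by auto. right; apply in_eq.
  - rewrite Rmin_right by lra. destruct IH as [IH|IH]; [left; auto| right; apply in_cons; auto]. Qed.

Lemma minK_le K f k : (k < K)%nat -> minK K f <= f k.
Proof. intros Hk. unfold minK. apply (proj2 (fr_min_le _ _)). apply in_map. apply in_seq; lia. Qed.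

Lemma minK_att K f : (1 <= K)%nat -> exists j, (j < K)%nat /\ minK K f = f j.
Proof. intros HK. unfold minK. destruct (fr_min_att (f 0%nat) (map f (seq 0 K))) as [H|H].
  - exists 0%nat; split; [lia|auto].
  - apply in_map_iff in H. destruct H as [j [Hj Hin]]. apply in_seq in Hin. exists j; split; [lia|auto].
Qed.

Lemma minK_glb K f c : (1 <= K)%nat -> (forall k, (k < K)%nat -> c <= f k) -> c <= minK K f.
Proof. intros HK H. destruct (minK_att K f HK) as [j [Hj ->]]. auto. Qed.

Lemma minK_ext K f g : (1 <= K)%nat -> (forall k, (k < K)%nat -> f k = g k) -> minK K f = minK K g.
Proof. intros HK H. apply Rle_antisym.
  - apply minK_glb; auto. intros k Hk. rewrite <- H by auto. apply minK_le; auto.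
  - apply minK_glb; auto. intros k Hk. rewrite H by auto. apply minK_le; auto.
Qed.

Definition pv K (w : nat -> R) := (forall k, (k < K)%nat -> 0 <= w k) /\ sumK K w = 1.

Lemma ew_pv K r L : (1 <= K)%nat -> pv K (ew_weight K r L).
Proof.
  intros HK. unfold pv. destruct r as [e|]; unfold ew_weight; cbv zeta.
  - set (Z := sumK K (fun j => exp (- e * L j))).
    assert (HZ : 0 < Z).
    { apply Rlt_le_trans with (exp (- e * L 0%nat)); [apply exp_pos|].
      apply (sumK_ge_term K (fun j => exp (- e * L j))); [intros; left; apply exp_pos| lia]. }
    split.
    + intros k Hk. unfold Rdiv. apply Rmult_le_pos; [left; apply exp_pos| left; apply Rinv_0_lt_compat; auto].
    + unfold Rdiv. rewrite (sumK_ext K _ (fun k => / Z * exp (- e * L k))) by (intros; ring).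
      rewrite sumK_scal. fold Z. field. lra.
  - set (I := fun j => if Req_dec_T (L j) (minK K L) then 1 else 0).
    assert (HI : forall j, 0 <= I j) by (intro j; unfold I; destruct Req_dec_T; lra).
    assert (HZ : 0 < sumK K I).
    { destruct (minK_att K L HK) as [j [Hj Ej]].
      apply Rlt_le_trans with (I j); [unfold I; destruct Req_dec_T; [lra| congruence]|].
      apply sumK_ge_term; auto. }
    split.
    + intros k Hk. unfold Rdiv. apply Rmult_le_pos; [exact (HI k)| left; apply Rinv_0_lt_compat; auto].
    + unfold Rdiv. rewrite (sumK_ext K _ (fun k => / sumK K I * I k)) by (intros; unfold I; ring).
      rewrite sumK_scal. field. lra.
Qed.

Lemma ew_None_leader K L k : ew_weight K None L k = 0 \/ L k = minK K L.
Proof. simpl. destruct Req_EM_T; [right; auto| left; unfold Rdiv; ring]. Qed.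

Lemma pv_mean K w l a b : pv K w -> (forall k, (k < K)%nat -> a <= l k <= b) ->
  a <= sumK K (fun k => w k * l k) <= b.
Proof.
  intros [Hw Hs] Hl. split.
  - replace a with (a * sumK K w) by (rewrite Hs; ring). rewrite <- sumK_scal.
    apply sumK_le. intros k Hk. specialize (Hw k Hk); specialize (Hl k Hk). nra.
  - replace b with (b * sumK K w) by (rewrite Hs; ring). rewrite <- sumK_scal.
    apply sumK_le. intros k Hk. specialize (Hw k Hk); specialize (Hl k Hk). nra.
Qed.

Lemma pv_lin K w l c0 c1 : pv K w -> sumK K (fun k => w k * (c0 + c1 * l k)) = c0 + c1 * sumK K (fun k => w k * l k).
Proof. intros [_ Hs]. rewrite sumK_lin, Hs. ring. Qed.

Lemma ln_le_sub1 x : 0 < x -> ln x <= x - 1.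
Proof. intros Hx. rewrite <- (ln_exp (x - 1)). apply ln_le; auto.
  assert (H := exp_ineq1_le (x - 1)). lra. Qed.

Lemma exp_bern e x : 0 < e < 3 -> x <= e -> exp x <= 1 + x + x^2 * (1 / (2 * (1 - e/3))).
Proof.
  intros He Hx.
  assert (Hg : 1/2 <= 1 / (2 * (1 - e/3))).
  { unfold Rdiv. rewrite !Rmult_1_l. apply Rinv_le_contravar; lra. }
  destruct (Rle_dec x 0) as [Hn|Hp].
  - eapply Rle_trans; [apply exp_neg_upper; auto|]. assert (0 <= x^2) by nra. nra.
  - eapply Rle_trans; [apply exp_upper; lra|].
    assert (x^2 / (2 * (1 - x/3)) <= x^2 * (1 / (2 * (1 - e/3)))).
    { unfold Rdiv. rewrite Rmult_1_l. apply Rmult_le_compat_l; [nra|].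
      apply Rinv_le_contravar; lra. }
    lra.
Qed.

Lemma round_some K w l e : (1 <= K)%nat -> pv K w -> (forall k, (k < K)%nat -> 0 <= l k <= 1) -> 0 < e ->
  let h := sumK K (fun k => w k * l k) in
  let A := sumK K (fun k => w k * exp (- e * l k)) in
  0 < A /\ A <= 1 /\ exp (- e * h) <= A /\ 0 <= h <= 1 /\
  (h + ln A / e) * (1 - e/3) <= e * (h * (1 - h)) / 2.
Proof.
  intros HK Hpv Hl He h A.
  assert (Hh : 0 <= h <= 1) by (apply pv_mean; auto).
  destruct Hpv as [Hw Hs].
  assert (HJ : exp (- e * h) <= A).
  { set (q := exp (- e * h)).
    assert (E : q = q * (1 + e * h) + (- e * q) * h) by ring.
    assert (Elin : sumK K (fun k => w k * (q * (1 + e * h) + (- e * q) * l k)) = q * (1 + e * h) + (- e * q) * h)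
      by (exact (pv_lin K w l _ _ (conj Hw Hs))).
    rewrite E at 1. rewrite <- Elin. unfold A.
    apply sumK_le. intros k Hk. apply Rmult_le_compat_l; [auto|].
    assert (E2 : exp (- e * l k) = q * exp (- e * l k - (- e * h))).
    { unfold q. rewrite <- exp_plus. f_equal. ring. }
    rewrite E2. assert (H := exp_ineq1_le (- e * l k - - e * h)).
    assert (0 < q) by apply exp_pos.
    assert (q * (1 + (- e * l k - - e * h)) <= q * exp (- e * l k - - e * h)) by (apply Rmult_le_compat_l; lra).
    nra. }
  assert (HA1 : A <= 1).
  { rewrite <- Hs. apply sumK_le. intros k Hk. specialize (Hl k Hk). specialize (Hw k Hk).
    assert (exp (- e * l k) <= 1) by (rewrite <- exp_0; apply exp_le; nra). nra. }
  assert (HA0 : 0 < A) by (eapply Rlt_le_trans; [apply exp_pos| apply HJ]).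
  split; [auto|]. split; [auto|]. split; [auto|]. split; [auto|].
  assert (Hd0 : 0 <= h + ln A / e).
  { assert (- e * h <= ln A) by (rewrite <- (ln_exp (- e * h)); apply ln_le; [apply exp_pos|auto]).
    assert (- h <= ln A / e). { apply Rmult_le_reg_r with e; auto. unfold Rdiv. rewrite Rmult_assoc, Rinv_l by lra. lra. }
    lra. }
  destruct (Rle_dec 3 e) as [He3|He3].
  - assert (0 <= h * (1 - h)) by nra. nra.
  - set (g := 1 / (2 * (1 - e/3))).
    assert (Hg : 0 < g) by (unfold g; apply Rdiv_lt_0_compat; lra).
    set (B := sumK K (fun k => w k * exp (e * (h - l k)))).
    assert (HAB : A = exp (- e * h) * B).
    { unfold B, A. rewrite <- sumK_scal. apply sumK_ext. intros k Hk.
      replace (exp (- e * l k)) with (exp (- e * h) * exp (e * (h - l k))) by (rewrite <- exp_plus; f_equal; ring). ring. }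
    assert (HB : B <= 1 + e^2 * g * (h * (1 - h))).
    { replace (1 + e^2 * g * (h * (1 - h))) with
        ((1 + e * h + e^2 * g * h^2) + (- e - 2 * e^2 * g * h + e^2 * g) * h) by ring.
      assert (Elin : sumK K (fun k => w k * ((1 + e * h + e^2 * g * h^2) + (- e - 2 * e^2 * g * h + e^2 * g) * l k)) = (1 + e * h + e^2 * g * h^2) + (- e - 2 * e^2 * g * h + e^2 * g) * h)
        by (exact (pv_lin K w l _ _ (conj Hw Hs))).
      rewrite <- Elin. unfold B.
      apply sumK_le. intros k Hk. apply Rmult_le_compat_l; [auto|].
      specialize (Hl k Hk).
      eapply Rle_trans; [apply (exp_bern e); [lra|nra]|]. fold g.
      assert (e^2 * (h - l k)^2 <= e^2 * (h^2 - 2 * h * l k + l k)).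
      { apply Rmult_le_compat_l; [nra|]. nra. }
      replace ((e * (h - l k))^2) with (e^2 * (h - l k)^2) by ring. nra. }
    assert (HB0 : 0 < B).
    { apply Rmult_lt_reg_l with (exp (- e * h)); [apply exp_pos|]. rewrite <- HAB. lra. }
    assert (HlnA : ln A = - e * h + ln B) by (rewrite HAB, ln_mult, ln_exp; auto; apply exp_pos).
    assert (HlnB : ln B <= e^2 * g * (h * (1 - h))).
    { eapply Rle_trans; [apply ln_le_sub1; auto| lra]. }
    assert (Hd : h + ln A / e <= e * g * (h * (1 - h))).
    { rewrite HlnA. unfold Rdiv. replace ((- e * h + ln B) * / e) with (- h + ln B * / e) by (field; lra).
      assert (ln B * / e <= e * g * (h * (1 - h))).
      { apply Rmult_le_reg_r with e; auto. rewrite Rmult_assoc, Rinv_l by lra. nra. }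
      lra. }
    assert (Hg2 : g * (1 - e/3) = 1/2) by (unfold g; field; lra).
    assert (0 <= 1 - e/3) by lra.
    apply Rle_trans with (e * g * (h * (1 - h)) * (1 - e/3)).
    + apply Rmult_le_compat_r; auto.
    + replace (e * g * (h * (1 - h)) * (1 - e / 3)) with (e * (h * (1 - h)) * (g * (1 - e/3))) by ring.
      rewrite Hg2. lra.
Qed.

Definition Phi K (r : lrate) (L : nat -> R) : R :=
  match r with
  | None => minK K L
  | Some e => - (1 / e) * ln (sumK K (fun k => exp (- e * L k)) / INR K)
  end.

Lemma negdiv_le e X Y : 0 < e -> X <= Y -> - (1/e) * Y <= - (1/e) * X.
Proof. intros He H. assert (0 < 1/e) by (apply Rdiv_lt_0_compat; lra).
  assert ((1/e) * X <= (1/e) * Y) by (apply Rmult_le_compat_l; lra). lra. Qed.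

Lemma INR_pos K : (1 <= K)%nat -> 0 < INR K.
Proof. intros. apply lt_0_INR; lia. Qed.

Lemma ln_div x y : 0 < x -> 0 < y -> ln (x / y) = ln x - ln y.
Proof. intros. unfold Rdiv. rewrite ln_mult.
  - rewrite ln_Rinv by auto. ring.
  - auto.
  - apply Rinv_0_lt_compat; auto. Qed.

Lemma Phi_bounds K e L : (1 <= K)%nat -> 0 < e ->
  minK K L <= Phi K (Some e) L <= minK K L + ln (INR K) / e.
Proof.
  intros HK He. simpl.
  set (m := minK K L). set (Z := sumK K (fun k => exp (- e * L k))).
  destruct (minK_att K L HK) as [j [Hj Ej]]. fold m in Ej.
  assert (Hlo : exp (- e * m) <= Z).
  { rewrite Ej. apply (sumK_ge_term K (fun k => exp (- e * L k))); auto. intros; left; apply exp_pos. }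
  assert (Hhi : Z <= INR K * exp (- e * m)).
  { rewrite <- sumK_const. apply sumK_le. intros k Hk. apply exp_le.
    assert (m <= L k) by (apply minK_le; auto). nra. }
  assert (HKp := INR_pos K HK).
  assert (HZ : 0 < Z) by (eapply Rlt_le_trans; [apply exp_pos|eauto]).
  rewrite ln_div by auto.
  assert (H1 : ln Z <= - e * m + ln (INR K)).
  { rewrite <- (ln_exp (- e * m)), <- ln_mult by (auto; apply exp_pos). apply ln_le; auto. lra. }
  assert (H2 : - e * m <= ln Z).
  { rewrite <- (ln_exp (- e * m)). apply ln_le; auto. apply exp_pos. }
  split.
  - replace m with (- (1/e) * (- e * m)) at 1 by (field; lra). apply negdiv_le; lra.
  - replace (m + ln (INR K) / e) with (- (1/e) * (- e * m - ln (INR K))) by (field; lra).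
    apply negdiv_le; lra.
Qed.

Lemma Phi_mono K e1 e2 L : (1 <= K)%nat -> 0 < e1 <= e2 ->
  Phi K (Some e2) L <= Phi K (Some e1) L.
Proof.
  intros HK He. simpl.
  assert (HKp := INR_pos K HK).
  set (p := e1 / e2).
  assert (Hp : 0 < p <= 1).
  { unfold p; split; [apply Rdiv_lt_0_compat; lra|]. apply Rmult_le_reg_r with e2; [lra|].
    unfold Rdiv; rewrite Rmult_assoc, Rinv_l by lra. lra. }
  set (Z2 := sumK K (fun k => exp (- e2 * L k))).
  set (Z1 := sumK K (fun k => exp (- e1 * L k))).
  assert (HZ2 : 0 < Z2).
  { eapply Rlt_le_trans; [apply (exp_pos (- e2 * L 0%nat))|].
    apply (sumK_ge_term K (fun k => exp (- e2 * L k))); [intros; left; apply exp_pos| lia]. }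
  assert (HZ1 : 0 < Z1).
  { eapply Rlt_le_trans; [apply (exp_pos (- e1 * L 0%nat))|].
    apply (sumK_ge_term K (fun k => exp (- e1 * L k))); [intros; left; apply exp_pos| lia]. }
  set (M := ln (Z2 / INR K)).
  assert (HeM : exp M = Z2 / INR K) by (unfold M; apply exp_ln; apply Rdiv_lt_0_compat; auto).
  set (c0 := exp (p * M) * (1 - p)). set (c1 := exp (p * M) * p / exp M).
  assert (Hpt : forall k, exp (- e1 * L k) <= c0 + c1 * exp (- e2 * L k)).
  { intro k.
    assert (E : exp (- e1 * L k) = exp (p * M) * exp (p * (- e2 * L k - M))).
    { rewrite <- exp_plus. f_equal. unfold p. field. lra. }
    rewrite E. assert (H := exp_convex p (- e2 * L k - M) (conj (Rlt_le _ _ (proj1 Hp)) (proj2 Hp))).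
    assert (E2 : exp (- e2 * L k - M) = exp (- e2 * L k) / exp M).
    { unfold Rminus. rewrite exp_plus, exp_Ropp. reflexivity. }
    rewrite E2 in H. unfold c0, c1.
    assert (0 < exp (p * M)) by apply exp_pos.
    apply Rle_trans with (exp (p * M) * (1 + p * (exp (- e2 * L k) / exp M - 1))).
    + apply Rmult_le_compat_l; lra.
    + apply Req_le. field. apply Rgt_not_eq, exp_pos. }
  assert (HZ1b : Z1 <= INR K * exp (p * M)).
  { apply Rle_trans with (sumK K (fun k => c0 + c1 * exp (- e2 * L k))).
    - apply sumK_le; auto.
    - rewrite sumK_plus, sumK_const, sumK_scal. fold Z2. unfold c0, c1. rewrite HeM.
      apply Req_le. field. lra. }
  assert (Hln : ln (Z1 / INR K) <= p * M).
  { rewrite <- (ln_exp (p * M)). apply ln_le; [apply Rdiv_lt_0_compat; auto|].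
    apply Rmult_le_reg_r with (INR K); auto. unfold Rdiv. rewrite Rmult_assoc, Rinv_l by lra. lra. }
  fold Z1 Z2 M.
  replace (- (1 / e2) * M) with (- (1 / e1) * (p * M)) by (unfold p; field; lra).
  apply negdiv_le; lra.
Qed.

Lemma cumL_S loss t k : cumL loss (S t) k = cumL loss t k + loss (S t) k.
Proof. reflexivity. Qed.

Lemma mix_Phi K loss r t : (1 <= K)%nat -> (1 <= t)%nat -> (forall e, r = Some e -> 0 < e) ->
  mixloss K loss r t = Phi K r (cumL loss t) - Phi K r (cumL loss (t - 1)).
Proof.
  intros HK Ht Hr. destruct t as [|t']; [lia|]. replace (S t' - 1)%nat with t' by lia.
  destruct r as [e|]; [|unfold mixloss, Lstar; replace (S t' - 1)%nat with t' by lia; reflexivity].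
  specialize (Hr e eq_refl). unfold mixloss. destruct (Req_EM_T e 0) as [E|_]; [lra|].
  simpl Phi.
  assert (HKp := INR_pos K HK).
  set (Z0 := sumK K (fun k => exp (- e * cumL loss t' k))).
  set (Z1 := sumK K (fun k => exp (- e * cumL loss (S t') k))).
  assert (HZ0 : 0 < Z0).
  { eapply Rlt_le_trans; [apply (exp_pos (- e * cumL loss t' 0%nat))|].
    apply (sumK_ge_term K (fun k => exp (- e * cumL loss t' k))); [intros; left; apply exp_pos| lia]. }
  assert (HZ1 : 0 < Z1).
  { eapply Rlt_le_trans; [apply (exp_pos (- e * cumL loss (S t') 0%nat))|].
    apply (sumK_ge_term K (fun k => exp (- e * cumL loss (S t') k))); [intros; left; apply exp_pos| lia]. }
  replace (S t' - 1)%nat with t' by lia.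
  rewrite (sumK_ext K _ (fun k => / Z0 * exp (- e * cumL loss (S t') k))).
  2:{ intros k Hk. unfold ew_weight. fold Z0. rewrite cumL_S.
      replace (- e * (cumL loss t' k + loss (S t') k)) with (- e * cumL loss t' k + - e * loss (S t') k) by ring.
      rewrite exp_plus. unfold Rdiv. ring. }
  rewrite sumK_scal. fold Z1.
  rewrite !ln_div by auto. rewrite ln_mult by (auto; apply Rinv_0_lt_compat; auto).
  rewrite ln_Rinv by auto. assert (EZ : sumK K (fun k => exp (- e * (cumL loss t' k + loss (S t') k))) = Z1) by reflexivity. rewrite EZ. ring.
Qed.

Lemma cumL_bounds K T loss : (forall t k, (1 <= t <= T)%nat -> (k < K)%nat -> 0 <= loss t k <= 1) ->
  forall t k, (t <= T)%nat -> (k < K)%nat -> 0 <= cumL loss t k <= INR t.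
Proof.
  intros Hl t k Ht Hk. induction t as [|t IH]; simpl cumL; [simpl; lra|].
  rewrite S_INR. assert (H1 := Hl (S t) k ltac:(lia) Hk). assert (H2 := IH ltac:(lia)). lra.
Qed.

Lemma Lstar_bounds K T loss : (1 <= K)%nat -> (forall t k, (1 <= t <= T)%nat -> (k < K)%nat -> 0 <= loss t k <= 1) ->
  forall t, (t <= T)%nat -> 0 <= Lstar K loss t <= INR t.
Proof.
  intros HK Hl t Ht. unfold Lstar. split.
  - apply minK_glb; auto. intros k Hk. apply (cumL_bounds K T loss Hl t k Ht Hk).
  - eapply Rle_trans; [apply (minK_le K _ 0%nat); lia|]. apply (cumL_bounds K T loss Hl t 0%nat Ht); lia.
Qed.

Lemma ftl_round K loss t : (1 <= K)%nat -> (1 <= t)%nat -> (forall k, (k < K)%nat -> 0 <= loss t k <= 1) ->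
  0 <= hloss K loss None t <= 1 /\
  0 <= mixgap K loss None t <= 1.
Proof.
  intros HK Ht Hl. destruct t as [|t']; [lia|].
  assert (Hpv := ew_pv K None (cumL loss t') HK).
  unfold mixgap, hloss, mixloss, Lstar. replace (S t' - 1)%nat with t' by lia.
  set (w := ew_weight K None (cumL loss t')) in *.
  assert (Hh : 0 <= sumK K (fun k => w k * loss (S t') k) <= 1) by (apply pv_mean; auto).
  assert (Hm0 : minK K (cumL loss t') <= minK K (cumL loss (S t'))).
  { apply minK_glb; auto. intros k Hk. rewrite cumL_S. assert (H := Hl k Hk).
    assert (minK K (cumL loss t') <= cumL loss t' k) by (apply minK_le; auto). lra. }
  set (d := minK K (cumL loss (S t')) - minK K (cumL loss t')).
  assert (Hhd : d <= sumK K (fun k => w k * loss (S t') k)).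
  { destruct Hpv as [Hw Hs].
    replace d with (d * sumK K w) by (rewrite Hs; ring). rewrite <- sumK_scal.
    apply sumK_le. intros k Hk.
    destruct (ew_None_leader K (cumL loss t') k) as [E|E].
    - fold w in E. rewrite E. lra.
    - assert (d <= loss (S t') k).
      { unfold d. assert (minK K (cumL loss (S t')) <= cumL loss (S t') k) by (apply minK_le; auto).
        rewrite cumL_S in H. lra. }
      assert (0 <= w k) by auto. nra. }
  split; [auto|]. fold d. assert (0 <= d) by (unfold d; lra). lra.
Qed.

Definition st K loss t := ff_state K (237/100) (1243/1000) loss t.
Definition rv K loss t := ff_eta K (st K loss t).
Definition hv K loss u := hloss K loss (ff_rate K (237/100) (1243/1000) loss u) u.
Definition dv K loss u := mixgap K loss (ff_rate K (237/100) (1243/1000) loss u) u.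
Definition mv K loss u := mixloss K loss (ff_rate K (237/100) (1243/1000) loss u) u.
Definition Fv K loss t := ff_dflip (st K loss t).
Definition Gv K loss t := ff_dflop (st K loss t).
Definition Xv K loss t := sumT t (mv K loss) - Phi K (rv K loss t) (cumL loss t).
Definition Wv K loss t := sumT t (fun u => hv K loss u * (1 - hv K loss u)).
Definition Dv K loss t := sumT t (dv K loss).
Definition Dftl K loss t := sumT t (fun u => mixgap K loss None u).

Lemma ff_rate_S K loss t : ff_rate K (237/100) (1243/1000) loss (S t) = rv K loss t.
Proof. unfold ff_rate, rv, st. rewrite Nat.sub_succ, Nat.sub_0_r. reflexivity. Qed.

Lemma st_S K loss t : st K loss (S t) =
  if ff_flip (st K loss t) then
    (if Rlt_dec ((237/100) / (1243/1000) * ff_dflop (st K loss t))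
                (ff_dflip (st K loss t) + mixgap K loss (rv K loss t) (S t))
     then FFState false (ff_dflip (st K loss t) + mixgap K loss (rv K loss t) (S t)) (ff_dflop (st K loss t))
     else FFState true (ff_dflip (st K loss t) + mixgap K loss (rv K loss t) (S t)) (ff_dflop (st K loss t)))
  else
    (if Rlt_dec ((1243/1000) * ff_dflip (st K loss t))
                (ff_dflop (st K loss t) + mixgap K loss (rv K loss t) (S t))
     then FFState true (ff_dflip (st K loss t)) (ff_dflop (st K loss t) + mixgap K loss (rv K loss t) (S t))
     else FFState false (ff_dflip (st K loss t)) (ff_dflop (st K loss t) + mixgap K loss (rv K loss t) (S t))).
Proof. reflexivity. Qed.

Definition Inv K loss t : Prop :=
  0 <= Fv K loss t /\ 0 <= Gv K loss t /\
  (ff_flip (st K loss t) = true ->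
     Fv K loss t <= 2370/1243 * Gv K loss t /\ Gv K loss t <= 1243/1000 * Fv K loss t + 1 /\
     Xv K loss t <= 237/137 * Gv K loss t) /\
  (ff_flip (st K loss t) = false ->
     Gv K loss t <= 1243/1000 * Fv K loss t /\ Fv K loss t <= 2370/1243 * Gv K loss t + 1 /\
     Xv K loss t <= 1243/1370 * Fv K loss t /\ Xv K loss t <= 237/137 * Gv K loss t) /\
  Gv K loss t ^ 2 <= ln (INR K) * Wv K loss t + (2 * ln (INR K) / 3 + 1) * Gv K loss t /\
  Dv K loss t = Fv K loss t + Gv K loss t /\
  Fv K loss t <= Dftl K loss t /\ 0 <= Wv K loss t.

Lemma lam_pos K : (2 <= K)%nat -> 0 < ln (INR K).
Proof. intros HK. rewrite <- ln_1. apply ln_increasing; [lra|].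
  replace 1 with (INR 1) by reflexivity. apply lt_INR; lia. Qed.

Lemma round_facts K loss r u : (2 <= K)%nat -> (1 <= u)%nat ->
  (forall k, (k < K)%nat -> 0 <= loss u k <= 1) -> (forall e, r = Some e -> 0 < e) ->
  0 <= hloss K loss r u <= 1 /\ 0 <= mixgap K loss r u <= 1 /\
  mixloss K loss r u = hloss K loss r u - mixgap K loss r u /\
  (forall e, r = Some e -> mixgap K loss r u * (1 - e/3) <= e * (hloss K loss r u * (1 - hloss K loss r u)) / 2).
Proof.
  intros HK Hu Hl Hr.
  assert (HK1 : (1 <= K)%nat) by lia.
  destruct r as [e|].
  - specialize (Hr e eq_refl).
    assert (Hpv := ew_pv K (Some e) (cumL loss (u - 1)) HK1).
    destruct (round_some K (ew_weight K (Some e) (cumL loss (u - 1))) (loss u) e HK1 Hpv Hl Hr)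
      as (HA0 & HA1 & HJ & Hh & HB).
    set (h := sumK K (fun k => ew_weight K (Some e) (cumL loss (u - 1)) k * loss u k)) in *.
    set (A := sumK K (fun k => ew_weight K (Some e) (cumL loss (u - 1)) k * exp (- e * loss u k))) in *.
    assert (Eh : hloss K loss (Some e) u = h) by reflexivity.
    assert (Em : mixloss K loss (Some e) u = - (1/e) * ln A).
    { unfold mixloss. destruct (Req_EM_T e 0); [lra|]. reflexivity. }
    assert (Ed : mixgap K loss (Some e) u = h + ln A / e).
    { unfold mixgap. rewrite Eh, Em. field. lra. }
    rewrite Ed, Eh, Em.
    assert (HlA : - e * h <= ln A) by (rewrite <- (ln_exp (- e * h)); apply ln_le; [apply exp_pos|auto]).
    assert (HlA1 : ln A <= 0) by (rewrite <- ln_1; apply ln_le; auto).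
    assert (H1 : - h <= ln A / e).
    { apply Rmult_le_reg_r with e; auto. unfold Rdiv. rewrite Rmult_assoc, Rinv_l by lra. lra. }
    assert (H2 : ln A / e <= 0).
    { unfold Rdiv. assert (0 < / e) by (apply Rinv_0_lt_compat; lra). nra. }
    split; [auto|]. split; [lra|]. split; [field; lra|].
    intros e' E. inversion E; subst e'. auto.
  - destruct (ftl_round K loss u HK1 Hu Hl) as [H1 H2].
    split; [auto|]. split; [auto|]. split; [unfold mixgap; ring|]. intros e E; discriminate.
Qed.

Lemma Inv_0 K loss : (1 <= K)%nat -> Inv K loss 0.
Proof.
  intros HK. unfold Inv, Fv, Gv, Xv, Wv, Dv, Dftl, rv, st. simpl ff_state. cbn [ff_dflip ff_dflop ff_flip ff_eta].
  rewrite !sumT_0. simpl Phi.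
  assert (E : minK K (fun _ : nat => 0) = 0).
  { destruct (minK_att K (fun _ : nat => 0) HK) as [j [_ ->]]. reflexivity. }
  rewrite E.
  assert (0 <= ln (INR K)) by (rewrite <- ln_1; apply ln_le; [lra|]; replace 1 with (INR 1) by reflexivity; apply le_INR; lia).
  repeat split; intros; try discriminate; nra.
Qed.

Lemma Inv_step K T loss t : (2 <= K)%nat ->
  (forall t k, (1 <= t <= T)%nat -> (k < K)%nat -> 0 <= loss t k <= 1) ->
  (t < T)%nat -> Inv K loss t -> Inv K loss (S t).
Proof.
  intros HK Hl Ht I.
  assert (HK1 : (1 <= K)%nat) by lia.
  pose proof (lam_pos K HK) as Hlam.
  unfold Inv, Fv, Gv in I. destruct I as (HF & HG & Ifl & Ifo & IG2 & ID & IDf & IW).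
  set (lam := ln (INR K)) in *.
  set (F := ff_dflip (st K loss t)) in *. set (G := ff_dflop (st K loss t)) in *.
  set (r := rv K loss t).
  assert (Hr : forall e, r = Some e -> 0 < e).
  { unfold r, rv, ff_eta. fold G. destruct (ff_flip (st K loss t)); [discriminate|].
    destruct (Req_EM_T G 0) as [|Gn]; [discriminate|]. intros e E. inversion E.
    apply Rdiv_lt_0_compat; auto. destruct HG; [auto| congruence]. }
  assert (Hlu : forall k, (k < K)%nat -> 0 <= loss (S t) k <= 1) by (intros; apply Hl; lia).
  destruct (round_facts K loss r (S t) HK ltac:(lia) Hlu Hr) as (Hh & Hd & Hm & HB).
  assert (Hmix := mix_Phi K loss r (S t) HK1 ltac:(lia) Hr).
  replace (S t - 1)%nat with t in Hmix by lia.
  destruct (ftl_round K loss (S t) HK1 ltac:(lia) Hlu) as [_ Hftl].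
  set (h := hloss K loss r (S t)) in *. set (d := mixgap K loss r (S t)) in *.
  set (L1 := cumL loss (S t)) in *.
  assert (EX : Xv K loss (S t) = Xv K loss t + Phi K r L1 - Phi K (rv K loss (S t)) L1).
  { unfold Xv. rewrite sumT_S.
    assert (Em : mv K loss (S t) = mixloss K loss r (S t)) by (unfold mv; rewrite ff_rate_S; reflexivity).
    rewrite Em, Hmix. fold r L1. ring. }
  assert (EW : Wv K loss (S t) = Wv K loss t + h * (1 - h)).
  { unfold Wv. rewrite sumT_S. unfold hv at 3 4. rewrite ff_rate_S. reflexivity. }
  assert (ED : Dv K loss (S t) = Dv K loss t + d).
  { unfold Dv. rewrite sumT_S. unfold dv at 2. rewrite ff_rate_S. reflexivity. }
  assert (EDf : Dftl K loss (S t) = Dftl K loss t + mixgap K loss None (S t)).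
  { unfold Dftl. rewrite sumT_S. reflexivity. }
  set (X := Xv K loss t) in *. set (W := Wv K loss t) in *.
  assert (Hv : 0 <= h * (1 - h)) by nra.
  assert (HlW : 0 <= lam * W) by nra.
  assert (Hlv : 0 <= lam * (h * (1 - h))) by nra.
  assert (Hdd : d * d <= d) by nra.
  unfold Inv, Fv, Gv. rewrite EX, EW, ED, EDf. rewrite ID.
  unfold rv. rewrite st_S. fold r. fold F G. fold d.
  destruct (ff_flip (st K loss t)) eqn:Efl.
  - destruct (Ifl eq_refl) as (IF1 & IF2 & IX).
    assert (Er : r = None) by (unfold r, rv, ff_eta; rewrite Efl; reflexivity).
    rewrite Er. assert (Hd' : d = mixgap K loss None (S t)) by (unfold d; rewrite Er; reflexivity).
    destruct (Rlt_dec (237 / 100 / (1243 / 1000) * G) (F + d)) as [Hsw|Hns];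
      cbn [ff_flip ff_dflip ff_dflop ff_eta].
    + assert (Hc : Phi K None L1 - Phi K (if Req_EM_T G 0 then None else Some (lam / G)) L1 <= 0).
      { destruct (Req_EM_T G 0) as [|Gn]; [lra|].
        assert (0 < lam / G) by (apply Rdiv_lt_0_compat; auto; destruct HG; [auto|congruence]).
        destruct (Phi_bounds K (lam / G) L1 HK1 H). simpl Phi at 1. lra. }
      fold lam.
      repeat split; intros; try discriminate; try lra.
    + fold lam.
      repeat split; intros; try discriminate; try lra.
  - destruct (Ifo eq_refl) as (IG1 & IF1 & IX1 & IX2).
    assert (GG : (G + d) ^ 2 <= lam * (W + h * (1 - h)) + (2 * lam / 3 + 1) * (G + d)).
    { destruct (Req_EM_T G 0) as [G0|Gn].
      - rewrite G0 in *. nra.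
      - assert (Er : r = Some (lam / G)).
        { unfold r, rv, ff_eta. rewrite Efl. fold G. destruct (Req_EM_T G 0); [congruence|reflexivity]. }
        assert (HGp : 0 < G) by (destruct HG; [auto|congruence]).
        specialize (HB _ Er).
        assert (K2 : 2 * G * (d * (1 - lam / G / 3)) <= 2 * G * (lam / G * (h * (1 - h)) / 2))
          by (apply Rmult_le_compat_l; lra).
        replace (2 * G * (d * (1 - lam / G / 3))) with (2 * G * d - 2 / 3 * lam * d) in K2 by (field; lra).
        replace (2 * G * (lam / G * (h * (1 - h)) / 2)) with (lam * (h * (1 - h))) in K2 by (field; lra).
        nra. }
    destruct (Req_EM_T G 0) as [G0|Gn].
    + assert (Er : r = None).
      { unfold r, rv, ff_eta. rewrite Efl. fold G. destruct (Req_EM_T G 0); [reflexivity|congruence]. }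
      rewrite Er.
      destruct (Rlt_dec (1243 / 1000 * F) (G + d)) as [Hsw|Hns];
        cbn [ff_flip ff_dflip ff_dflop ff_eta].
      * fold lam. repeat split; intros; try discriminate; try lra.
      * assert (Hc : Phi K None L1 - Phi K (if Req_EM_T (G + d) 0 then None else Some (lam / (G + d))) L1 <= 0).
        { destruct (Req_EM_T (G + d) 0) as [|Gn]; [lra|].
          assert (0 < lam / (G + d)) by (apply Rdiv_lt_0_compat; auto; lra).
          destruct (Phi_bounds K (lam / (G + d)) L1 HK1 H). simpl Phi at 1. lra. }
        fold lam. repeat split; intros; try discriminate; try lra.
    + assert (HGp : 0 < G) by (destruct HG; [auto|congruence]).
      assert (Er : r = Some (lam / G)).
      { unfold r, rv, ff_eta. rewrite Efl. fold G. destruct (Req_EM_T G 0); [congruence|reflexivity]. }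
      rewrite Er.
      assert (He : 0 < lam / G) by (apply Rdiv_lt_0_compat; auto).
      destruct (Phi_bounds K (lam / G) L1 HK1 He) as [Pb1 Pb2].
      fold lam in Pb2. replace (lam / (lam / G)) with G in Pb2 by (field; lra).
      destruct (Rlt_dec (1243 / 1000 * F) (G + d)) as [Hsw|Hns];
        cbn [ff_flip ff_dflip ff_dflop ff_eta].
      * simpl Phi at 2. fold lam.
        repeat split; intros; try discriminate; try lra.
      * destruct (Req_EM_T (G + d) 0) as [|Gn2]; [lra|].
        assert (Hmo : Phi K (Some (lam / G)) L1 <= Phi K (Some (lam / (G + d))) L1).
        { apply Phi_mono; auto. split; [apply Rdiv_lt_0_compat; lra|].
          unfold Rdiv. apply Rmult_le_compat_l; [lra|]. apply Rinv_le_contravar; lra. }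
        fold lam. repeat split; intros; try discriminate; try lra.
Qed.

Lemma Inv_all K T loss : (2 <= K)%nat ->
  (forall t k, (1 <= t <= T)%nat -> (k < K)%nat -> 0 <= loss t k <= 1) ->
  forall t, (t <= T)%nat -> Inv K loss t.
Proof.
  intros HK Hl t. induction t as [|t IH]; intros Ht.
  - apply Inv_0; lia.
  - apply (Inv_step K T loss t HK Hl); [lia| apply IH; lia].
Qed.

Lemma sqrt_add_le x y : 0 <= x -> 0 <= y -> sqrt (x + y) <= sqrt x + sqrt y.
Proof.
  intros Hx Hy.
  assert (H1 := sqrt_pos x). assert (H2 := sqrt_pos y).
  rewrite <- (sqrt_pow2 (sqrt x + sqrt y)) by lra.
  apply sqrt_le_1_alt.
  assert (sqrt x * sqrt x = x) by (apply sqrt_sqrt; auto).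
  assert (sqrt y * sqrt y = y) by (apply sqrt_sqrt; auto).
  nra.
Qed.

Lemma final_alg lam Sx G R W : 0 < lam -> 0 <= Sx -> 0 <= G -> 0 <= R ->
  G ^ 2 <= lam * W + (2 * lam / 3 + 1) * G -> W <= Sx + R ->
  R <= (237/137 + 2370/1243 + 2) * G + 1 ->
  R <= 564/100 * sqrt (Sx * lam) + 3553/100 * lam + 778/100 * sqrt lam + 754/100.
Proof.
  intros Hl HS HG HR HG2 HW HRG.
  set (a := 237/137 + 2370/1243 + 2) in *.
  set (p := Sx * lam + lam). set (q := lam * a + 2 * lam / 3 + 1).
  assert (Hp : 0 <= p) by (unfold p; nra).
  assert (Hq : 0 <= q) by (unfold q, a; lra).
  assert (H1 : lam * W <= lam * (Sx + R)) by (apply Rmult_le_compat_l; lra).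
  assert (H2 : lam * R <= lam * (a * G + 1)) by (apply Rmult_le_compat_l; lra).
  assert (HG3 : G ^ 2 <= p + q * G) by (unfold p, q; nra).
  set (sp := sqrt p).
  assert (Hsp0 : 0 <= sp) by apply sqrt_pos.
  assert (Hsp2 : sp * sp = p) by (apply sqrt_sqrt; auto).
  assert (HGb : G <= q + sp).
  { destruct (Rle_dec G (q + sp)) as [|Hn]; [auto|]. exfalso.
    assert (G * G > (q + sp) * G) by (apply Rmult_lt_compat_r; lra).
    assert ((q + sp) * G >= q * G + sp * sp) by nra.
    nra. }
  assert (Hsq : sp <= sqrt (Sx * lam) + sqrt lam) by (apply sqrt_add_le; nra).
  assert (s1 := sqrt_pos (Sx * lam)). assert (s2 := sqrt_pos lam).
  assert (HR2 : R <= a * (q + sqrt (Sx * lam) + sqrt lam) + 1).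
  { assert (a * G <= a * (q + sqrt (Sx * lam) + sqrt lam)) by (apply Rmult_le_compat_l; unfold a; lra). lra. }
  unfold q, a in HR2. lra.
Qed.

Lemma Lstar0 K loss : (1 <= K)%nat -> Lstar K loss 0 = 0.
Proof. intros HK. unfold Lstar. destruct (minK_att K (cumL loss 0) HK) as [j [_ ->]]. reflexivity. Qed.

Lemma ftl_tele K loss n :
  sumT n (fun u => hloss K loss None u) = sumT n (fun u => mixgap K loss None u) + Lstar K loss n - Lstar K loss 0.
Proof.
  induction n as [|n IH].
  - rewrite !sumT_0. ring.
  - rewrite !sumT_S, IH. unfold mixgap, mixloss. rewrite Nat.sub_succ, Nat.sub_0_r. ring.
Qed.

Lemma sumsq T f : (1 <= T)%nat ->
  sumT T (fun u => f u * (1 - f u)) <= sumT T f - (sumT T f) ^ 2 / INR T.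
Proof.
  intros HT. set (H := sumT T f). set (Q := sumT T (fun u => f u ^ 2)).
  assert (HTp : 0 < INR T) by (apply lt_0_INR; lia).
  assert (E1 : sumT T (fun u => f u * (1 - f u)) = H - Q).
  { rewrite (sumT_ext T _ (fun u => f u + (-1) * f u ^ 2)) by (intros; ring).
    rewrite sumT_plus, sumT_scal. fold H Q. ring. }
  set (c := H / INR T).
  assert (E2 : sumT T (fun u => (f u - c) ^ 2) = Q + (-2 * c) * H + INR T * c ^ 2).
  { rewrite (sumT_ext T _ (fun u => (f u ^ 2 + (-2 * c) * f u) + c ^ 2)) by (intros; ring).
    rewrite sumT_plus, sumT_plus, sumT_scal, sumT_const. fold H Q. ring. }
  assert (N : 0 <= sumT T (fun u => (f u - c) ^ 2)) by (apply sumT_nonneg; intros; apply pow2_ge_0).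
  assert (E3 : (-2 * c) * H + INR T * c ^ 2 = - (H ^ 2 / INR T)) by (unfold c; field; lra).
  rewrite E1. lra.
Qed.

Lemma hv_dec K loss u : hv K loss u = mv K loss u + dv K loss u.
Proof. unfold hv, mv, dv, mixgap. ring. Qed.

Theorem main_K2 K T loss : (2 <= K)%nat -> (1 <= T)%nat ->
  (forall t k, (1 <= t <= T)%nat -> (k < K)%nat -> 0 <= loss t k <= 1) ->
  regret_ff K (237 / 100) (1243 / 1000) loss T
    <= 564 / 100 * regret_ftl K loss T + 464 / 100 /\
  regret_ff K (237 / 100) (1243 / 1000) loss T <=
    564 / 100 * sqrt (Lstar K loss T * (INR T - Lstar K loss T) / INR T * ln (INR K))
    + 3553 / 100 * ln (INR K) + 778 / 100 * sqrt (ln (INR K)) + 754 / 100.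
Proof.
  intros HK HT Hl.
  assert (HK1 : (1 <= K)%nat) by lia.
  pose proof (lam_pos K HK) as Hlam.
  destruct (Inv_all K T loss HK Hl T (le_n T)) as (HF & HG & Ifl & Ifo & IG2 & ID & IDf & IW).
  unfold Fv, Gv in *.
  set (lam := ln (INR K)) in *.
  set (F := ff_dflip (st K loss T)) in *. set (G := ff_dflop (st K loss T)) in *.
  set (X := Xv K loss T) in *.
  set (Ls := Lstar K loss T).
  assert (ER : regret_ff K (237 / 100) (1243 / 1000) loss T = X + Phi K (rv K loss T) (cumL loss T) + F + G - Ls).
  { unfold regret_ff. change (sumT T (fun t => hloss K loss (ff_rate K (237/100) (1243/1000) loss t) t))
      with (sumT T (fun t => hv K loss t)).
    rewrite (sumT_ext T _ (fun t => mv K loss t + dv K loss t)) by (intros; apply hv_dec).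
    rewrite sumT_plus. replace (sumT T (dv K loss)) with (F + G) by (rewrite <- ID; reflexivity).
    unfold X, Xv. fold Ls. ring. }
  assert (EF : regret_ftl K loss T = Dftl K loss T).
  { unfold regret_ftl. rewrite ftl_tele, Lstar0 by auto. unfold Dftl. ring. }
  assert (HPh : Phi K (rv K loss T) (cumL loss T) <= Ls + (if ff_flip (st K loss T) then 0 else G)
             /\ Ls <= Phi K (rv K loss T) (cumL loss T)).
  { unfold rv, ff_eta. fold G. destruct (ff_flip (st K loss T)).
    - simpl. unfold Ls, Lstar. lra.
    - destruct (Req_EM_T G 0) as [G0|Gn].
      + simpl. unfold Ls, Lstar. lra.
      + assert (He : 0 < lam / G) by (apply Rdiv_lt_0_compat; auto; destruct HG; [auto|congruence]).
        destruct (Phi_bounds K (lam / G) (cumL loss T) HK1 He) as [P1 P2].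
        fold lam in P2. replace (lam / (lam / G)) with G in P2 by (field; split; lra).
        unfold Ls, Lstar. fold lam. lra. }
  assert (HR1 : regret_ff K (237 / 100) (1243 / 1000) loss T <= 564 / 100 * regret_ftl K loss T + 464 / 100).
  { rewrite ER, EF. destruct HPh as [HP1 HP2].
    destruct (ff_flip (st K loss T)) eqn:E.
    - destruct (Ifl eq_refl) as (A1 & A2 & A3). lra.
    - destruct (Ifo eq_refl) as (A1 & A2 & A3 & A4). lra. }
  assert (HRG : regret_ff K (237 / 100) (1243 / 1000) loss T <= (237/137 + 2370/1243 + 2) * G + 1).
  { rewrite ER. destruct HPh as [HP1 HP2].
    destruct (ff_flip (st K loss T)) eqn:E.
    - destruct (Ifl eq_refl) as (A1 & A2 & A3). lra.
    - destruct (Ifo eq_refl) as (A1 & A2 & A3 & A4). lra. }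
  split; [exact HR1|].
  set (R := regret_ff K (237 / 100) (1243 / 1000) loss T) in *.
  destruct (Lstar_bounds K T loss HK1 Hl T (le_n T)) as [HLs0 HLs1]. fold Ls in HLs0, HLs1.
  assert (HTp : 0 < INR T) by (apply lt_0_INR; lia).
  assert (HSx : 0 <= Ls * (INR T - Ls) / INR T).
  { apply Rmult_le_pos; [nra| left; apply Rinv_0_lt_compat; auto]. }
  assert (s1 := sqrt_pos (Ls * (INR T - Ls) / INR T * lam)). assert (s2 := sqrt_pos lam).
  destruct (Rle_dec 0 R) as [HR0|HR0]; [|lra].
  apply (final_alg lam (Ls * (INR T - Ls) / INR T) G R (Wv K loss T)); auto.
  assert (HH : sumT T (hv K loss) = R + Ls) by (unfold R, regret_ff, Ls; change (sumT T (fun t => hloss K loss (ff_rate K (237/100) (1243/1000) loss t) t)) with (sumT T (hv K loss)); ring).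
  assert (Hs := sumsq T (hv K loss) HT). unfold Wv.
  rewrite HH in Hs.
  assert (E : R + Ls - (R + Ls) ^ 2 / INR T = Ls * (INR T - Ls) / INR T + R - (R * R + 2 * R * Ls) / INR T)
    by (field; lra).
  assert (0 <= (R * R + 2 * R * Ls) / INR T) by (apply Rmult_le_pos; [nra| left; apply Rinv_0_lt_compat; auto]).
  lra.
Qed.

Lemma k1_hloss loss r u : hloss 1 loss r u = loss u 0%nat.
Proof.
  destruct (ew_pv 1 r (cumL loss (u - 1)) (le_n 1)) as [_ Hs].
  unfold hloss. unfold sumK in *. simpl in *. rewrite Rplus_0_r in Hs. rewrite Hs. ring.
Qed.

Lemma k1_Lstar loss t : Lstar 1 loss t = cumL loss t 0%nat.
Proof. unfold Lstar, minK. simpl. apply Rmin_left. lra. Qed.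

Lemma k1_sum loss n : sumT n (fun u => loss u 0%nat) = cumL loss n 0%nat.
Proof. induction n as [|n IH]; [reflexivity|]. rewrite sumT_S, IH. reflexivity. Qed.

Theorem corollary15 (K T : nat) (loss : nat -> nat -> R)
  (HK : (1 <= K)%nat) (HT : (1 <= T)%nat)
  (Hloss : forall t k, (1 <= t <= T)%nat -> (k < K)%nat -> 0 <= loss t k <= 1) :
  regret_ff K (237 / 100) (1243 / 1000) loss T
    <= 564 / 100 * regret_ftl K loss T + 464 / 100 /\
  regret_ff K (237 / 100) (1243 / 1000) loss T <=
    564 / 100 * sqrt (Lstar K loss T * (INR T - Lstar K loss T) / INR T * ln (INR K))
    + 3553 / 100 * ln (INR K) + 778 / 100 * sqrt (ln (INR K)) + 754 / 100.
Proof.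
  destruct (Nat.eq_dec K 1) as [E|E].
  - subst K.
    assert (E1 : regret_ff 1 (237 / 100) (1243 / 1000) loss T = 0).
    { unfold regret_ff. rewrite (sumT_ext T _ (fun u => loss u 0%nat)) by (intros; apply k1_hloss).
      rewrite k1_sum, k1_Lstar. ring. }
    assert (E2 : regret_ftl 1 loss T = 0).
    { unfold regret_ftl. rewrite (sumT_ext T _ (fun u => loss u 0%nat)) by (intros; apply k1_hloss).
      rewrite k1_sum, k1_Lstar. ring. }
    rewrite E1, E2. change (INR 1) with 1. rewrite ln_1.
    assert (H1 := sqrt_pos (Lstar 1 loss T * (INR T - Lstar 1 loss T) / INR T * 0)).
    assert (H2 := sqrt_pos 0). lra.
  - apply main_K2; auto. lia.
Qed.
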